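(* Let $\mathcal{G}=(\mathcal{V},\mathcal{E},A)$ be a connected directed graph with diagonal matrix of out-degrees $D$, and suppose there is a permutation matrix $P$ with $D=AP$. Let $\mathcal{G}_u$ be the undirected graph on the same node set with adjacency matrix $A_u=\frac12(A+A^T)$ (so $(i,j)\in\mathcal{E}$ implies both $(i,j)$ and $(j,i)$ are edges of $\mathcal{G}_u$). Then for every pair of nodes $k,j$, the effective resistance between $k$ and $j$ in $\mathcal{G}$ equals the effective resistance between $k$ and $j$ in $\mathcal{G}_u$.
   Context: A (weighted directed) graph $\mathcal{G}=(\mathcal{V},\mathcal{E},A)$ has node set $\mathcal{V}=\{1,\dots,N\}$, edge set $\mathcal{E}\subseteq\mathcal{V}\times\mathcal{V}$, and nonnegative adjacency matrix $A=[a_{i,j}]\in\mathbb{R}^{N\times N}$ with $a_{i,j}>0$ iff $(i,j)\in\mathcal{E}$; $(i,j)$ is an edge from $i$ to $j$. The graph is undirected if $A$ is symmetric. The out-degree of node $k$ is $d_k=\sum_j a_{k,j}$, $D=\mathrm{diag}(d_1,\dots,d_N)$, and the Laplacian is $L=D-A$. Directed paths follow edges in their direction. $\mathcal{G}$ is connected if it contains a globally reachable node (a node reachable by a directed path from every node). Let $\mathbf{1}_N$ be the all-ones vector, $\Pi=I_N-\frac1N\mathbf{1}_N\mathbf{1}_N^T$, and $Q\in\mathbb{R}^{(N-1)\times N}$ any matrix with $Q\mathbf{1}_N=\mathbf{0}$, $QQ^T=I_{N-1}$, $Q^TQ=\Pi$. For connected $\mathcal{G}$, let $\overline{L}=QLQ^T$,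 let $\Sigma$ be the unique solution of $\overline{L}\Sigma+\Sigma\overline{L}^T=I_{N-1}$, and $X=[x_{i,j}]=2Q^T\Sigma Q$ ($X$ does not depend on the choice of $Q$). The effective resistance between nodes $k$ and $j$ is $r_{k,j}=x_{k,k}+x_{j,j}-2x_{k,j}$. A permutation matrix has exactly one entry $1$ in each row and column and zeros elsewhere. *)

(* Defs.v *)
From HB Require Import structures.
From mathcomp Require Import all_boot all_order all_algebra all_fingroup.
Set Implicit Arguments. Unset Strict Implicit. Unset Printing Implicit Defensive.
Import Order.TTheory GRing.Theory Num.Theory.
Local Open Scope ring_scope.

Section Graphs.
Variables (R : rcfType) (n : nat).
Local Notation N := n.+1.

Definition nonneg_adj (A : 'M[R]_N) : Prop := forall i j, 0 <= A i j.

Definition edge_rel (A : 'M[R]_N) : rel 'I_N := fun i j => 0 < A i j.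

Definition globally_reachable (A : 'M[R]_N) (g : 'I_N) : Prop :=
  forall i, connect (edge_rel A) i g.
Definition connected_graph (A : 'M[R]_N) : Prop :=
  exists g, globally_reachable A g.

Definition out_degree (A : 'M[R]_N) (k : 'I_N) : R := \sum_j A k j.
Definition degree_mx (A : 'M[R]_N) : 'M[R]_N := diag_mx (\row_k out_degree A k).
Definition laplacian (A : 'M[R]_N) : 'M[R]_N := degree_mx A - A.

Definition undirected_adj (A : 'M[R]_N) : 'M[R]_N := 2^-1 *: (A + A^T).

Definition Pi_mx : 'M[R]_N := 1%:M - (N%:R)^-1 *: const_mx 1.

Definition is_Q (Q : 'M[R]_(n, N)) : Prop :=
  [/\ Q *m const_mx 1 = (0 : 'cV[R]_n), Q *m Q^T = 1%:M & Q^T *m Q = Pi_mx].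

Definition Lbar (A : 'M[R]_N) (Q : 'M[R]_(n, N)) : 'M[R]_n := Q *m laplacian A *m Q^T.

Definition is_Sigma (A : 'M[R]_N) (Q : 'M[R]_(n, N)) (S : 'M[R]_n) : Prop :=
  Lbar A Q *m S + S *m (Lbar A Q)^T = 1%:M.

Definition X_mx (Q : 'M[R]_(n, N)) (S : 'M[R]_n) : 'M[R]_N := 2%:R *: (Q^T *m S *m Q).

Definition eff_res (Q : 'M[R]_(n, N)) (S : 'M[R]_n) (k j : 'I_N) : R :=
  X_mx Q S k k + X_mx Q S j j - 2%:R * X_mx Q S k j.

End Graphs.

(* Main.v *)
Require Import Defs.
From HB Require Import structures.
From mathcomp Require Import all_boot all_order all_algebra all_fingroup.
From mathcomp Require Import ring.
Set Implicit Arguments. Unset Strict Implicit. Unset Printing Implicit Defensive.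
Import Order.TTheory GRing.Theory Num.Theory.
Local Open Scope ring_scope.

Section Abstract.
Variables (R : rcfType) (n : nat).
Local Notation N := n.+1.
Local Notation one := (const_mx 1 : 'cV[R]_N).

Variable K : 'M[R]_N.
Hypothesis Ksym : K^T = K.
Hypothesis Kpsd : forall v : 'cV[R]_N, 0 <= (v^T *m K *m v) 0 0.
Hypothesis Kker : forall v : 'cV[R]_N, (v^T *m K *m v) 0 0 = 0 -> exists c, v = c *: one.

Lemma diag_col (X : 'M[R]_N) j : (X^T *m K *m X) j j = ((col j X)^T *m K *m col j X) 0 0.
Proof.
rewrite !mxE; apply: eq_bigr => a _; rewrite !mxE; congr (_ * _).
by apply: eq_bigr => b _; rewrite !mxE.
Qed.

Lemma tr_kill (X : 'M[R]_N) : \tr (X^T *m K *m X) = 0 -> one^T *m X = 0 -> X = 0.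
Proof.
move=> htr h1.
have hc : forall j, ((col j X)^T *m K *m col j X) 0 0 = 0.
  move=> j; rewrite -diag_col.
  move: htr; rewrite /mxtrace => /psumr_eq0P; apply=> // i _.
  by rewrite diag_col.
apply/matrixP => i j.
have [c hcj] := Kker (hc j).
have : (one^T *m X) 0 j = 0 by rewrite h1 mxE.
rewrite mxE (eq_bigr (fun _ => c)); last first.
  move=> k _; have := congr1 (fun M : 'cV[R]_N => M k 0) hcj.
  by rewrite !mxE mul1r mulr1.
rewrite sumr_const card_ord => /eqP; rewrite -mulr_natr mulf_eq0 pnatr_eq0 orbF => /eqP c0.
have := congr1 (fun M : 'cV[R]_N => M i 0) hcj; rewrite !mxE c0 mul0r => <-.
by [].
Qed.

Lemma lyap_uniq (M Z : 'M[R]_N) (eps : R) :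
  K *m M + M^T *m K = K *m K -> M *m Z + Z *m M^T = 0 ->
  Z^T = eps *: Z -> Z *m one = 0 -> one^T *m Z = 0 -> Z = 0.
Proof.
move=> hKM hMZ hZt hZ1 h1Z.
have hMZ' : M *m Z = - (Z *m M^T) by apply/eqP; rewrite -subr_eq0 opprK hMZ.
have trN : forall X : 'M[R]_N, \tr (- X) = - \tr X.
  by move=> X; rewrite -scaleN1r mxtraceZ mulN1r.
set t := \tr (M *m Z *m K *m Z *m K).
have e1 : \tr (K *m M *m Z *m K *m Z^T) = eps * t.
  rewrite hZt -scalemxAr mxtraceZ; congr (_ * _).
  by rewrite -!mulmxA mxtrace_mulC !mulmxA.
have e2 : \tr (M^T *m K *m Z *m K *m Z^T) = - (eps * t).
  rewrite mxtrace_mulC !mulmxA -trmx_mul hMZ' linearN /= trmx_mul trmxK.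
  by rewrite hZt !mulNmx trN -scalemxAr -!scalemxAl mxtraceZ.
have t0 : \tr ((K *m M + M^T *m K) *m Z *m K *m Z^T) = 0.
  by rewrite !mulmxDl mxtraceD e1 e2 addrN.
rewrite hKM in t0.
have hX : Z^T *m K = 0.
  apply: tr_kill.
    rewrite trmx_mul Ksym trmxK -t0 -!mulmxA mxtrace_mulC.
    have := mxtrace_mulC (K *m K) (Z *m K *m Z^T); rewrite !mulmxA => ->; done.
  by rewrite mulmxA -trmx_mul hZ1 trmx0 mul0mx.
have hKZ : K *m Z = 0 by rewrite -[Z]trmxK -Ksym -trmx_mul hX trmx0.
apply: tr_kill => //.
by rewrite -mulmxA hKZ mulmx0 mxtrace0.
Qed.

Lemma sol_sym (M Y C : 'M[R]_N) : K *m M + M^T *m K = K *m K ->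
  M *m Y + Y *m M^T = C -> C^T = C -> Y *m one = 0 -> one^T *m Y = 0 -> Y^T = Y.
Proof.
move=> hKM hY hC hY1 h1Y.
have hYt : M *m Y^T + Y^T *m M^T = C.
  by rewrite -hC -hY linearD /= !trmx_mul trmxK addrC.
have Z0 : Y^T - Y = 0.
  apply: (lyap_uniq (M := M) (eps := -1)) => //.
  - by rewrite mulmxBr mulmxBl addrACA hYt -opprD hY subrr.
  - by rewrite linearB /= trmxK scaleN1r opprB.
  - by rewrite mulmxBl hY1 -[one]trmxK -trmx_mul h1Y trmx0 subr0.
  by rewrite mulmxBr h1Y -[one]trmxK -trmx_mul trmxK hY1 trmx0 subr0.
by apply/eqP; rewrite -subr_eq0 Z0.
Qed.

Lemma sol_eq (M Y1 Y2 C : 'M[R]_N) : K *m M + M^T *m K = K *m K ->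
  M *m Y1 + Y1 *m M^T = C -> M *m Y2 + Y2 *m M^T = C ->
  Y1^T = Y1 -> Y2^T = Y2 -> Y1 *m one = 0 -> Y2 *m one = 0 ->
  one^T *m Y1 = 0 -> one^T *m Y2 = 0 -> Y1 = Y2.
Proof.
move=> hKM h1 h2 s1 s2 a1 a2 b1 b2.
have Z0 : Y1 - Y2 = 0.
  apply: (lyap_uniq (M := M) (eps := 1)) => //.
  - by rewrite mulmxBr mulmxBl addrACA h1 -opprD h2 subrr.
  - by rewrite linearB /= s1 s2 scale1r.
  - by rewrite mulmxBl a1 a2 subrr.
  by rewrite mulmxBr b1 b2 subrr.
by apply/eqP; rewrite -subr_eq0 Z0.
Qed.

Hypothesis Kone : K *m one = 0.
Variable Pi : 'M[R]_N.
Hypotheses (Pisym : Pi^T = Pi) (Pione : Pi *m one = 0) (KPi : K *m Pi = K)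
  (PiPi : Pi *m Pi = Pi).

Lemma PiK : Pi *m K = K.
Proof. by rewrite -[Pi]Pisym -[K in LHS]Ksym -trmx_mul KPi Ksym. Qed.

Lemma oneK : one^T *m K = 0.
Proof. by rewrite -Ksym -trmx_mul Kone trmx0. Qed.

Lemma onePi : one^T *m Pi = 0.
Proof. by rewrite -Pisym -trmx_mul Pione trmx0. Qed.

Lemma stepU (Y : 'M[R]_N) : Y^T = Y -> K *m Y + Y *m K = 2%:R *: Pi ->
  one^T *m Y = 0 -> K *m Y = Pi.
Proof.
move=> hY hE h1Y.
have hYK : Y *m K = 2%:R *: Pi - K *m Y by rewrite -hE addrC addKr.
set T := K *m Y - Pi.
have hT : T^T = - T.
  rewrite /T linearB /= trmx_mul hY Ksym Pisym hYK.
  by rewrite scaler_nat mulr2n addrAC addrK opprB.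
have hTK : K *m T = - (T *m K).
  apply/eqP; rewrite -subr_eq0 opprK /T mulmxBl mulmxBr KPi PiK.
  rewrite -mulmxA hYK mulmxBr -scalemxAr KPi scaler_nat mulr2n.
  by rewrite [K + K - _ - _]addrAC addrK addrA subrK subrr.
have htr : \tr (T *m K *m T) = 0.
  have e : \tr (T *m K *m T) = - \tr (T *m K *m T).
    rewrite -[in LHS]mulmxA [LHS]mxtrace_mulC hTK mulNmx -scaleN1r mxtraceZ mulN1r.
    by [].
  by move/eqP: e; rewrite -subr_eq0 opprK -mulr2n mulrn_eq0 => /orP[/eqP|/eqP].
apply/eqP; rewrite -subr_eq0; apply/eqP; rewrite -/T.
apply: tr_kill.
  by rewrite hT mulNmx -scaleN1r -!scalemxAl mxtraceZ htr mulr0.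
by rewrite /T mulmxBr mulmxA oneK mul0mx onePi subr0.
Qed.

Lemma transfer (M Y : 'M[R]_N) : K *m M + M^T *m K = K *m K -> Pi *m M = M ->
  K *m Y = Pi -> Y^T = Y -> M *m Y + Y *m M^T = Pi.
Proof.
move=> hKM hPM hKY hY.
have hYK : Y *m K = Pi by rewrite -hY -Ksym -trmx_mul hKY Pisym.
have hMP : M^T *m Pi = M^T by rewrite -Pisym -trmx_mul hPM.
have := congr1 (fun X => Y *m X *m Y) hKM.
rewrite mulmxDr mulmxDl !mulmxA hYK -[Y *m M^T *m K *m Y]mulmxA hKY.
rewrite hPM -[Pi *m K *m Y]mulmxA hKY PiPi.
by rewrite -mulmxA hMP.
Qed.
End Abstract.

Section Graph.
Variables (R : rcfType) (n : nat).
Local Notation N := n.+1.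
Local Notation one := (const_mx 1 : 'cV[R]_N).

Lemma mul_Pi (X : 'M[R]_N) : X *m one = 0 -> X *m Pi_mx R n = X.
Proof.
move=> h; rewrite /Pi_mx mulmxBr mulmx1 -scalemxAr.
suff -> : X *m (const_mx 1 : 'M[R]_N) = 0 by rewrite scaler0 subr0.
apply/matrixP=> i j.
have -> : (X *m (const_mx 1 : 'M[R]_N)) i j = (X *m one) i 0.
  by rewrite !mxE; apply: eq_bigr => k _; rewrite !mxE.
by rewrite h !mxE.
Qed.

Lemma lift_eq (Q : 'M[R]_(n, N)) (L : 'M[R]_N) (S : 'M[R]_n) :
  Q *m L *m Q^T *m S + S *m (Q *m L *m Q^T)^T = 1%:M ->
  (Q^T *m Q *m L) *m (Q^T *m S *m Q) + (Q^T *m S *m Q) *m (Q^T *m Q *m L)^T = Q^T *m Q.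
Proof.
move=> h; have := congr1 (fun X => Q^T *m X *m Q) h.
rewrite mulmxDr mulmxDl mulmx1 !trmx_mul !trmxK !mulmxA => ->.
by [].
Qed.

Variables (A : 'M[R]_N) (s : 'S_N).
Hypothesis hdeg : degree_mx A = A *m perm_mx s.
Hypothesis hnn : nonneg_adj A.
Hypothesis hconn : connected_graph A.

Local Notation D := (degree_mx A).
Local Notation d := (out_degree A).
Local Notation Pt := (perm_mx s^-1 : 'M[R]_N).
Local Notation P := (perm_mx s : 'M[R]_N).
Definition Bm : 'M[R]_N := 1%:M - Pt.
Definition Km : 'M[R]_N := Bm^T *m D *m Bm.

Lemma PPt : P *m Pt = 1%:M.
Proof. by rewrite -perm_mxM mulgV perm_mx1. Qed.
Lemma PtP : Pt *m P = 1%:M.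
Proof. by rewrite -perm_mxM mulVg perm_mx1. Qed.

Lemma A_eq : A = D *m Pt.
Proof. by rewrite hdeg -mulmxA PPt mulmx1. Qed.

Lemma AE i j : A i j = d i *+ (i == s j).
Proof. transitivity ((D *m Pt) i j); first by rewrite -A_eq. by rewrite -col_permE !mxE. Qed.

Lemma d_ge0 i : 0 <= d i.
Proof. by apply: sumr_ge0 => j _; apply: hnn. Qed.

Lemma lap_eq : laplacian A = D *m Bm.
Proof. by rewrite /laplacian /Bm mulmxBr mulmx1 -A_eq. Qed.

Lemma Bt : Bm^T = 1%:M - P.
Proof. by rewrite /Bm linearB /= trmx1 tr_perm_mx invgK. Qed.

Lemma Bone : Bm *m one = 0.
Proof.
rewrite /Bm mulmxBl mul1mx -row_permE.
by apply/eqP; rewrite subr_eq0; apply/eqP/matrixP => i j; rewrite !mxE.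
Qed.

Lemma BBt : Bm *m Bm^T = Bm + Bm^T.
Proof.
rewrite Bt /Bm mulmxBl !mulmxBr !mul1mx !mulmx1 PtP.
by rewrite opprB addrC.
Qed.

Lemma Dsym : D^T = D.
Proof. by rewrite /degree_mx tr_diag_mx. Qed.

Lemma Ksym : Km^T = Km.
Proof. by rewrite /Km !trmx_mul trmxK Dsym mulmxA. Qed.

Lemma Kone : Km *m one = 0.
Proof. by rewrite /Km -mulmxA Bone mulmx0. Qed.


Lemma Pisym : (Pi_mx R n)^T = Pi_mx R n.
Proof. by rewrite /Pi_mx linearB /= trmx1 linearZ /= trmx_const. Qed.

Lemma BPi : Bm *m Pi_mx R n = Bm.
Proof. exact: mul_Pi Bone. Qed.

Lemma PiBt : Pi_mx R n *m Bm^T = Bm^T.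
Proof. by rewrite -Pisym -trmx_mul BPi. Qed.

Lemma KM_eq : Km *m (Pi_mx R n *m laplacian A) + (Pi_mx R n *m laplacian A)^T *m Km
   = Km *m Km.
Proof.
have e : Km *m Km = Bm^T *m D *m (Bm *m Bm^T) *m D *m Bm by rewrite /Km !mulmxA.
rewrite lap_eq e BBt (mulmxDr (Bm^T *m D) Bm Bm^T).
rewrite (mulmxDl (Bm^T *m D *m Bm) (Bm^T *m D *m Bm^T) D).
rewrite (mulmxDl (Bm^T *m D *m Bm *m D) (Bm^T *m D *m Bm^T *m D) Bm).
rewrite !trmx_mul Pisym Dsym /Km.
rewrite !mulmxA -(mulmxA _ Bm (Pi_mx R n)) BPi.
by rewrite -(mulmxA (Bm^T *m D) (Pi_mx R n) Bm^T) PiBt.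
Qed.

Lemma Bv (v : 'cV[R]_N) k : (Bm *m v) k 0 = v k 0 - v ((s^-1)%g k) 0.
Proof. by rewrite /Bm mulmxBl mul1mx -row_permE !mxE. Qed.

Lemma Kform (v : 'cV[R]_N) :
  (v^T *m Km *m v) 0 0 = \sum_k d k * ((Bm *m v) k 0) ^+ 2.
Proof.
rewrite /Km !mulmxA -trmx_mul -mulmxA.
rewrite mxE; apply: eq_bigr => k _.
rewrite /degree_mx mul_mx_diag !mxE; ring.
Qed.

Lemma Kpsd (v : 'cV[R]_N) : 0 <= (v^T *m Km *m v) 0 0.
Proof.
rewrite Kform; apply: sumr_ge0 => k _; apply: mulr_ge0; first exact: d_ge0.
exact: sqr_ge0.
Qed.

Lemma Kker (v : 'cV[R]_N) : (v^T *m Km *m v) 0 0 = 0 -> exists c, v = c *: one.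
Proof.
rewrite Kform => h0.
have ht : forall k, d k * ((Bm *m v) k 0) ^+ 2 = 0.
  move=> k; move: h0 => /psumr_eq0P; apply => // i _.
  by apply: mulr_ge0; [exact: d_ge0 | exact: sqr_ge0].
have he : forall i j, edge_rel A i j -> v i 0 = v j 0.
  move=> i j; rewrite /edge_rel AE.
  case: eqP => [->|]; last by rewrite mulr0n ltxx.
  rewrite mulr1n => dpos.
  have := ht (s j); rewrite Bv permK => /eqP; rewrite mulf_eq0 (gt_eqF dpos) /=.
  by rewrite sqrf_eq0 subr_eq0 => /eqP.
case: hconn => g hg.
have hc : forall i, v i 0 = v g 0.
  move=> i; have /connectP [p hp ->] := hg i.
  elim: p i hp => [|y p IH] i //= /andP [hiy hp].
  by rewrite (he _ _ hiy) IH.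
exists (v g 0); apply/matrixP => i j; rewrite (ord1 j) !mxE hc mulr1.
by [].
Qed.

Lemma Km_exp : Km = D - D *m Pt - (P *m D - P *m D *m Pt).
Proof.
rewrite /Km Bt /Bm !mulmxBl !mul1mx !mulmxBr !mulmx1.
by [].
Qed.

Lemma At : A^T = P *m D.
Proof. transitivity ((D *m Pt)^T); first by rewrite -A_eq. by rewrite trmx_mul Dsym tr_perm_mx invgK. Qed.

Lemma colsum i : \sum_k A k i = d (s i).
Proof.
rewrite (bigD1 (s i)) //= AE eqxx mulr1n big1 ?addr0 // => k /negPf hk.
by rewrite AE hk mulr0n.
Qed.

Lemma degU : degree_mx (undirected_adj A) = 2^-1 *: (D + P *m D *m Pt).
Proof.
rewrite -row_permE -col_permE.
apply/matrixP => i j; rewrite !mxE.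
rewrite (inj_eq (@perm_inj _ s)).
have -> : out_degree (undirected_adj A) i = 2^-1 * (d i + d (s i)).
  rewrite -(colsum i) /out_degree -big_split /= big_distrr /=; apply: eq_bigr => k _.
  by rewrite /undirected_adj !mxE.
by case: (i == j); rewrite ?mulr1n ?mulr0n ?addr0 ?mulr0.
Qed.

Lemma lapU : laplacian (undirected_adj A) = 2^-1 *: Km.
Proof.
rewrite /laplacian degU /undirected_adj At Km_exp -A_eq.
rewrite -scalerBr; congr (_ *: _).
by rewrite opprD opprB !addrA [D + _ - A]addrAC.
Qed.
End Graph.

Unset Implicit Arguments.
Set Strict Implicit.

Theorem proposition1 (R : rcfType) (n : nat) (A P : 'M[R]_n.+1)
    (Q Qu : 'M[R]_(n, n.+1)) (S Su : 'M[R]_n) :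
  nonneg_adj A ->
  connected_graph A ->
  is_perm_mx P ->
  degree_mx A = A *m P ->
  is_Q Q -> is_Sigma A Q S ->
  is_Q Qu -> is_Sigma (undirected_adj A) Qu Su ->
  forall k j : 'I_n.+1, eff_res Q S k j = eff_res Qu Su k j.
Proof.
move=> hnn hconn /is_perm_mxP [s ->] hdeg [hQ1 hQQt hQtQ] hS [hU1 hUUt hUtU] hSu k j.
pose one := (const_mx 1 : 'cV[R]_n.+1).
pose K := Km A s.
have Ks : K^T = K by apply: Ksym.
have Kp : forall v : 'cV[R]_n.+1, 0 <= (v^T *m K *m v) 0 0 by move=> v; apply: Kpsd.
have Kk : forall v : 'cV[R]_n.+1, (v^T *m K *m v) 0 0 = 0 -> exists c, v = c *: one.
  by move=> v; apply: Kker.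
have K1 : K *m one = 0 by apply: Kone.
pose Pi := Pi_mx R n.
have Pis : Pi^T = Pi by apply: Pisym.
have KPi : K *m Pi = K := mul_Pi K1.
have PiK : Pi *m K = K by rewrite -Pis -Ks -trmx_mul KPi.
have hPiQ : Pi = Q^T *m Q by rewrite hQtQ.
have PiPi : Pi *m Pi = Pi.
  by rewrite {1 2}hPiQ mulmxA -(mulmxA Q^T) hQQt mulmx1 -hPiQ.
have Pi1 : Pi *m one = 0 by rewrite hPiQ -mulmxA hQ1 mulmx0.
pose M := Pi *m laplacian A.
have KM : K *m M + M^T *m K = K *m K by apply: KM_eq.
have PiM : Pi *m M = M by rewrite /M mulmxA PiPi.
pose Y := Q^T *m S *m Q.
have hY : M *m Y + Y *m M^T = Pi by have := lift_eq hS; rewrite hQtQ.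
have Y1 : Y *m one = 0 by rewrite /Y -mulmxA hQ1 mulmx0.
have oY : one^T *m Y = 0.
  by rewrite /Y !mulmxA -trmx_mul hQ1 trmx0 !mul0mx.
have Ysym : Y^T = Y := sol_sym Ks Kp Kk KM hY Pis Y1 oY.
pose Mu := Pi *m laplacian (undirected_adj A).
have hMu : Mu = 2^-1 *: K.
  by rewrite /Mu (lapU (s:=s)) // -(scalemxAr (2^-1) Pi (Km A s)) -/K PiK.
have KMu : K *m Mu + Mu^T *m K = K *m K.
  have e : (2^-1 *: K)^T = 2^-1 *: K.
    by rewrite linearZ /= Ks.
  rewrite hMu e -(scalemxAr (2^-1) K K) -(scalemxAl (2^-1) K K) -scalerDl.
  have h2 : (2^-1 : R) + 2^-1 = 1 by field.
  by rewrite h2 scale1r.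
pose Yu := Qu^T *m Su *m Qu.
have hYu : Mu *m Yu + Yu *m Mu^T = Pi by have := lift_eq hSu; rewrite hUtU.
have Yu1 : Yu *m one = 0 by rewrite /Yu -mulmxA hU1 mulmx0.
have oYu : one^T *m Yu = 0.
  by rewrite /Yu !mulmxA -trmx_mul hU1 trmx0 !mul0mx.
have Yusym : Yu^T = Yu := sol_sym Ks Kp Kk KMu hYu Pis Yu1 oYu.
have hE : K *m Yu + Yu *m K = 2%:R *: Pi.
  move: hYu; rewrite hMu linearZ /= Ks -scalemxAl -scalemxAr -scalerDr => <-.
  by rewrite scalerA mulrC mulVf ?pnatr_eq0 // scale1r.
have KYu : K *m Yu = Pi := stepU Ks Kp Kk K1 Pis Pi1 KPi Yusym hE oYu.
have hYu2 : M *m Yu + Yu *m M^T = Pi := transfer Ks Pis PiPi KM PiM KYu Yusym.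
have eqY : Y = Yu := sol_eq Ks Kp Kk KM hY hYu2 Ysym Yusym Y1 Yu1 oY oYu.
by rewrite /eff_res /X_mx -/Y -/Yu eqY.
Qed.
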